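(* Let $A\in M_n(\mathbb{Z})$ induce an ergodic endomorphism of $\mathbb{T}^n$, and let $p$ be an odd prime with $\gcd(p,\det A)=1$. Let $\{u_m\}_{m\ge0}$ be the linear recurrence sequence induced by $A$ and, for $r\ge1$, let $T_r$ be the (minimal) period of the sequence $\{u_m \bmod p^r\}_{m\ge 0}$. Then there is $t\in\mathbb{N}$ such that $T_1=T_2=\cdots=T_t$ and $T_k=p^{k-t}T_1$ for every $k>t$.
   Context: Write $f(x)=\det(xI-A)=x^n-c_{n-1}x^{n-1}-\cdots-c_1x-c_0$. The linear recurrence sequence induced by $A$ is the integer sequence defined by $u_0=u_1=\cdots=u_{n-2}=0$, $u_{n-1}=1$, and $u_{m+n}=c_{n-1}u_{m+n-1}+\cdots+c_1u_{m+1}+c_0u_m$ for $m\ge 0$. When $\gcd(p,\det A)=1$, the sequence $\{u_m\bmod p^r\}$ is purely periodic. The endomorphism $x\mapsto Ax\bmod 1$ of $\mathbb{T}^n=\mathbb{R}^n/\mathbb{Z}^n$ is ergodic if it is ergodic with respect to Lebesgue measure (equivalently, $\det A\neq0$ and no eigenvalue of $A$ is a root of unity). *)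

(* Defs.v *)
From HB Require Import structures.
From mathcomp Require Import all_boot all_order all_algebra all_field.
Set Implicit Arguments. Unset Strict Implicit. Unset Printing Implicit Defensive.
Import Order.TTheory GRing.Theory Num.Theory.
Local Open Scope ring_scope.

(* Ergodicity of x |-> Ax mod 1 on T^n: det A <> 0 and no (complex)
   eigenvalue of A is a root of unity.  Eigenvalues are the roots in algC
   of the characteristic polynomial. *)
Definition ergodic_mx (n : nat) (A : 'M[int]_n) : Prop :=
  \det A != 0 /\
  forall z : algC, root (map_poly (intr : int -> algC) (char_poly A)) z ->
    forall k : nat, (0 < k)%N -> z ^+ k != 1.

(* f(x) = det(xI - A) = x^n - c_{n-1} x^{n-1} - ... - c_0, so c_i = - f_i. *)
Definition lrs_coef (n : nat) (A : 'M[int]_n) (i : nat) : int :=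
  - (char_poly A)`_i.

(* State (window) of the recurrence: [:: u_m; ...; u_{m+n-1}]. *)
Fixpoint lrs_state (n : nat) (A : 'M[int]_n) (m : nat) : seq int :=
  match m with
  | 0 => rcons (nseq n.-1 0) 1
  | m'.+1 => let s := lrs_state A m' in
             rcons (behead s) (\sum_(i < n) lrs_coef A i * s`_i)
  end.

(* The linear recurrence sequence induced by A:
   u_0 = ... = u_{n-2} = 0, u_{n-1} = 1,
   u_{m+n} = c_{n-1} u_{m+n-1} + ... + c_0 u_m. *)
Definition lrs (n : nat) (A : 'M[int]_n) (m : nat) : int :=
  head 0 (lrs_state A m).

Definition min_period_mod (v : nat -> int) (d : int) (T : nat) : Prop :=
  (0 < T)%N /\ (forall m, (v (m + T)%N == v m %[mod d])%Z) /\
  forall T', (0 < T')%N -> (forall m, (v (m + T')%N == v m %[mod d])%Z) ->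
    (T <= T')%N.

(* Main.v *)
Require Import Defs.
From HB Require Import structures.
From mathcomp Require Import all_boot all_order all_algebra all_field.
From mathcomp Require Import zify.
Set Implicit Arguments. Unset Strict Implicit. Unset Printing Implicit Defensive.
Import Order.TTheory GRing.Theory Num.Theory.
Local Open Scope ring_scope.

Lemma size_state n (A : 'M[int]_n.+1) m : size (lrs_state A m) = n.+1.
Proof.
elim: m => [|m IH] /=; first by rewrite size_rcons size_nseq.
by rewrite size_rcons size_behead IH.
Qed.

Lemma nth_state n (A : 'M[int]_n.+1) i m : (i < n.+1)%N ->
  (lrs_state A m)`_i = lrs A (m + i).
Proof.
elim: i m => [|i IH] m Hi; first by rewrite addn0 /lrs nth0.
have Hi' : (i < n.+1)%N by apply: ltnW.
rewrite -addSnnS -(IH _ Hi') /= nth_rcons size_behead size_state /=.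
by rewrite ltnS in Hi; rewrite Hi nth_behead.
Qed.

Lemma lrs_rec n (A : 'M[int]_n.+1) m :
  lrs A (m + n.+1) = \sum_(j < n.+1) lrs_coef A j * lrs A (m + j).
Proof.
rewrite -addSnnS -nth_state //= nth_rcons size_behead size_state /= ltnn eqxx.
by apply: eq_bigr => j _; rewrite nth_state.
Qed.

Lemma lrs_init n (A : 'M[int]_n.+1) i : (i < n.+1)%N ->
  lrs A i = (i == n)%:R.
Proof.
move=> Hi; rewrite -(add0n i) -nth_state //= nth_rcons size_nseq /=.
rewrite add0n; case: ltnP => H; first by rewrite nth_nseq H (ltn_eqF H).
by case: eqP.
Qed.
Definition cmx n (A : 'M[int]_n.+1) : 'M[int]_n.+1 :=
  \matrix_(i, j) if (i < n)%N then ((j : nat) == i.+1)%:R else lrs_coef A j.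
Definition V n (A : 'M[int]_n.+1) m : 'cV[int]_n.+1 := \col_i lrs A (m + i).

Lemma cmxV n (A : 'M[int]_n.+1) m : cmx A *m V A m = V A m.+1.
Proof.
apply/matrixP => i j; rewrite !mxE.
under eq_bigr do rewrite !mxE.
case: (ltnP i n) => Hi.
  have Hi1 : (i.+1 < n.+1)%N by [].
  rewrite (bigD1 (Ordinal Hi1)) //= eqxx mul1r big1 ?addr0 ?addnS ?addSn //.
  move=> k /eqP Hk; case: eqP => [Ek|]; last by rewrite mul0r.
  by exfalso; apply: Hk; apply: val_inj.
have -> : (i : nat) = n by apply/eqP; rewrite eqn_leq -ltnS ltn_ord Hi.
by rewrite addSnnS lrs_rec.
Qed.

Lemma cmxXV n (A : 'M[int]_n.+1) a m : cmx A ^+ a *m V A m = V A (a + m).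
Proof.
elim: a m => [|a IH] m; first by rewrite expr0 mul1mx.
by rewrite exprSr -mulmxE -mulmxA cmxV IH addnS.
Qed.

Definition dvdmx m n (d : int) (X : 'M[int]_(m, n)) : bool :=
  [forall i, forall j, (d %| X i j)%Z].

Lemma dvdmxP m n d (X : 'M[int]_(m, n)) :
  reflect (forall i j, (d %| X i j)%Z) (dvdmx d X).
Proof. by apply: (iffP 'forall_forallP). Qed.

Lemma dvdmxD m n d (X Y : 'M[int]_(m, n)) :
  dvdmx d X -> dvdmx d Y -> dvdmx d (X + Y).
Proof. by move=> /dvdmxP HX /dvdmxP HY; apply/dvdmxP => i j; rewrite mxE rpredD. Qed.

Lemma dvdmxN m n d (X : 'M[int]_(m, n)) : dvdmx d X -> dvdmx d (- X).
Proof. by move=> /dvdmxP HX; apply/dvdmxP => i j; rewrite mxE rpredN. Qed.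

Lemma dvdmxB m n d (X Y : 'M[int]_(m, n)) :
  dvdmx d X -> dvdmx d Y -> dvdmx d (X - Y).
Proof. by move=> HX HY; apply: dvdmxD => //; apply: dvdmxN. Qed.

Lemma dvdmx0 m n d : dvdmx d (0 : 'M[int]_(m, n)).
Proof. by apply/dvdmxP => i j; rewrite mxE dvdz0. Qed.

Lemma dvdmx_sum m n d I (r : seq I) (P : pred I) (F : I -> 'M[int]_(m, n)) :
  (forall i, P i -> dvdmx d (F i)) -> dvdmx d (\sum_(i <- r | P i) F i).
Proof.
move=> H; elim/big_rec: _ => [|i x Pi Hx]; first exact: dvdmx0.
exact: dvdmxD (H _ Pi) Hx.
Qed.

Lemma dvdmx_mulr m n p d (X : 'M[int]_(m, n)) (Y : 'M[int]_(n, p)) :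
  dvdmx d X -> dvdmx d (X *m Y).
Proof.
move=> /dvdmxP HX; apply/dvdmxP => i j; rewrite mxE.
by apply: rpred_sum => k _; apply: dvdz_mulr.
Qed.

Lemma dvdmx_mull m n p d (X : 'M[int]_(n, p)) (Y : 'M[int]_(m, n)) :
  dvdmx d X -> dvdmx d (Y *m X).
Proof.
move=> /dvdmxP HX; apply/dvdmxP => i j; rewrite mxE.
by apply: rpred_sum => k _; apply: dvdz_mull.
Qed.

Lemma dvdmxZ m n d c (X : 'M[int]_(m, n)) : (d %| c)%Z -> dvdmx d (c *: X).
Proof. by move=> H; apply/dvdmxP => i j; rewrite mxE dvdz_mulr. Qed.

Lemma dvdmx_trans m n d e (X : 'M[int]_(m, n)) :
  (d %| e)%Z -> dvdmx e X -> dvdmx d X.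
Proof. by move=> H /dvdmxP HX; apply/dvdmxP => i j; apply: dvdz_trans H _. Qed.

Lemma dvdmx_scale m n d (X : 'M[int]_(m, n)) :
  dvdmx d X -> exists B, X = d *: B.
Proof.
move=> /dvdmxP HX; exists (\matrix_(i, j) (X i j %/ d)%Z).
by apply/matrixP => i j; rewrite !mxE mulrC divzK.
Qed.

Definition Kmx n (A : 'M[int]_n.+1) : 'M[int]_n.+1 :=
  \matrix_(i, j) lrs A (rev_ord j + i).

Lemma Kmx_unit n (A : 'M[int]_n.+1) : Kmx A \in unitmx.
Proof.
have Ht : is_trig_mx (Kmx A).
  apply/is_trig_mxP => i j Hij; have Hj := ltn_ord j.
  rewrite mxE lrs_init /=; last by lia.
  by have /negbTE -> : (n.+1 - j.+1 + i != n)%N by lia.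
rewrite unitmxE det_trig // big1 ?unitr1 // => i _.
rewrite mxE lrs_init /=; last by have := ltn_ord i; lia.
by have -> : (n.+1 - i.+1 + i == n)%N by have := ltn_ord i; lia.
Qed.

Definition per (v : nat -> int) (d : int) T :=
  forall m, (v (m + T)%N == v m %[mod d])%Z.

Lemma per_dvdmx n (A : 'M[int]_n.+1) d T :
  per (lrs A) d T <-> dvdmx d (cmx A ^+ T - 1).
Proof.
split=> [HP|HD]; last move=> m.
  set X := cmx A ^+ T - 1.
  rewrite -(mulmxK (Kmx_unit A) X); apply: dvdmx_mulr.
  apply/dvdmxP => i j.
  have -> : (X *m Kmx A) i j = (X *m V A (rev_ord j)) i ord0.
    by rewrite !mxE; apply: eq_bigr => k _; rewrite !mxE.
  rewrite mulmxBl mul1mx cmxXV !mxE -eqz_mod_dvd.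
  by rewrite -addnA addnC; apply: HP.
rewrite eqz_mod_dvd.
have := dvdmx_mulr (V A m) HD; rewrite mulmxBl mul1mx cmxXV.
by move/dvdmxP/(_ ord0 ord0); rewrite !mxE !addn0 addnC.
Qed.

Lemma per_mul v d P k : per v d P -> per v d (k * P).
Proof.
move=> HP; elim: k => [|k IH] m; first by rewrite mul0n addn0.
by rewrite mulSn addnA (eqP (IH _)) (eqP (HP _)).
Qed.

Lemma per_minP v d P : min_period_mod v d P ->
  forall Q, per v d Q <-> (P %| Q)%N.
Proof.
move=> [P0 [HP Hmin]] Q; split=> [HQ|/dvdnP [k ->]]; last exact: per_mul.
have Hr : per v d (Q %% P).
  move=> m; rewrite -(eqP (per_mul (Q %/ P) HP _)) -addnA [(Q %% P + _)%N]addnC -divn_eq.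
  by rewrite (eqP (HQ _)).
case: (posnP (Q %% P)) => [H0|Hpos]; first by apply/eqP.
by have := Hmin _ Hpos Hr; rewrite leqNgt ltn_mod P0.
Qed.

Lemma PoszXn a k : Posz (a ^ k) = Posz a ^+ k.
Proof. by rewrite -!natz natrX. Qed.

Lemma bump0n k : bump 0 k = k.+1.
Proof. by rewrite /bump leq0n add1n. Qed.

Lemma binom_step n (p s : nat) (B : 'M[int]_n.+1) : prime p -> odd p -> (0 < s)%N ->
  dvdmx (Posz (p ^ s.+2)) ((1 + Posz (p ^ s) *: B) ^+ p - 1 - Posz (p ^ s.+1) *: B).
Proof.
move=> pr op s0.
have [p' Ep] : exists p', p = p'.+2.
  by case: p pr op => [|[|p']] //; exists p'.
have p3 : (0 < p')%N by case: p' Ep => // Ep; rewrite Ep in op.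
subst p.
rewrite [1 + _]addrC exprD1n big_ord_recl big_ord_recl /=.
under eq_bigr do rewrite !bump0n.
rewrite !bump0n expr0 expr1 bin0 bin1 mulr1n.
have -> : (Posz (p'.+2 ^ s) *: B) *+ p'.+2 = Posz (p'.+2 ^ s.+1) *: B.
  by rewrite -scaler_nat scalerA natz -PoszM expnS.
have E : forall a c : 'M[int]_n.+1, 1 + (a + c) - 1 - a = c.
  by move=> a c; rewrite [1 + _]addrC addrK addrC addKr.
rewrite E.
apply: dvdmx_sum => i _.
rewrite exprZn -scaler_nat scalerA; apply: dvdmxZ.
rewrite -PoszXn natz -PoszM dvdzE /= -expnM.
have Hi := ltn_ord i.
case: (ltnP i p') => Hip.
  rewrite expnS; apply: dvdn_mul; first by apply: prime_dvd_bin => //; lia.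
  by apply: dvdn_exp2l; nia.
have -> : (i : nat) = p' by lia.
by apply: dvdn_mull; apply: dvdn_exp2l; nia.
Qed.

Lemma iter_pow n p t (D B : 'M[int]_n.+1) : prime p -> odd p -> (0 < t)%N ->
  D = 1 + Posz (p ^ t) *: B ->
  forall j, exists Bj, D ^+ (p ^ j) = 1 + Posz (p ^ (t + j)) *: Bj /\
                       dvdmx (Posz p) (Bj - B).
Proof.
move=> pr op t0 HD; elim=> [|j [Bj [HBj HdB]]].
  by exists B; rewrite expn0 expr1 addn0 subrr dvdmx0.
have := binom_step Bj pr op (ltn_addr j t0).
rewrite -HBj -exprM -expnSr => /dvdmx_scale [E HE].
exists (Bj + Posz p *: E); split; last first.
  by rewrite addrAC; apply: dvdmxD => //; apply: dvdmxZ.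
have HY := congr1 (fun X => X + Posz (p ^ (t + j).+1) *: Bj + 1) HE.
rewrite /= subrK subrK in HY; rewrite HY addnS.
rewrite scalerDr scalerA -PoszM -expnSr addrC [_ *: Bj + _]addrC.
by [].
Qed.

Lemma cmx_not_periodic n (A : 'M[int]_n.+1) T :
  ergodic_mx A -> (0 < T)%N -> cmx A ^+ T != 1.
Proof.
move=> [_ Herg] T0; apply/eqP => HT.
have : size (map_poly intr (char_poly A) : {poly algC}) != 1%N.
  by rewrite size_map_inj_poly ?size_char_poly //; apply: intr_inj.
case/closed_rootP => z Hz.
pose w : 'cV[algC]_n.+1 := \col_i z ^+ i.
have Hw : map_mx intr (cmx A) *m w = z *: w.
  apply/matrixP => i j; rewrite !mxE.
  under eq_bigr do rewrite !mxE.
  case: (ltnP i n) => Hi.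
    have Hi1 : (i.+1 < n.+1)%N by [].
    rewrite (bigD1 (Ordinal Hi1)) //= eqxx rmorph1 mul1r big1 ?addr0 -?exprS //.
    move=> k /eqP Hk; case: eqP => [Ek|]; last by rewrite rmorph0 mul0r.
    by exfalso; apply: Hk; apply: val_inj.
  have -> : (i : nat) = n by apply/eqP; rewrite eqn_leq -ltnS ltn_ord Hi.
  move: Hz; rewrite /root horner_coef size_map_inj_poly ?size_char_poly //;
    last by apply: intr_inj.
  rewrite big_ord_recr /=.
  have Hl : (char_poly A)`_n.+1 = 1.
    by have := char_poly_monic A; rewrite monicE lead_coefE size_char_poly => /eqP.
  have Hl' : (map_poly intr (char_poly A) : {poly algC})`_n.+1 = 1.
    by rewrite coef_map_id0 ?mulr0z // Hl mulr1z.
  rewrite Hl' mul1r -exprS addrC addr_eq0 => /eqP ->.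
  rewrite -sumrN; apply: eq_bigr => k _.
  by rewrite coef_map_id0 ?mulr0z // /lrs_coef mulrNz mulNr.
have HwX : forall k, map_mx intr (cmx A ^+ k) *m w = z ^+ k *: w.
  elim=> [|k IH]; first by rewrite expr0 map_mx1 mul1mx scale1r.
  by rewrite exprS -mulmxE map_mxM -mulmxA IH -scalemxAr Hw scalerA -exprSr.
have := HwX T; rewrite HT map_mx1 mul1mx => /matrixP /(_ ord0 ord0).
rewrite !mxE expr0 mulr1 => Ez.
by have := Herg z Hz T T0; rewrite -Ez eqxx.
Qed.

Theorem lemma2p10 (n : nat) (A : 'M[int]_n) (p : nat) (T : nat -> nat) :
  (0 < n)%N ->
  ergodic_mx A ->
  prime p -> odd p ->
  coprime p `|\det A|%N ->
  (forall r : nat, (1 <= r)%N ->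
     min_period_mod (lrs A) ((p ^ r)%N)%:Z (T r)) ->
  exists t : nat,
    (forall k : nat, (1 <= k <= t)%N -> T k = T 1%N) /\
    (forall k : nat, (t < k)%N -> T k = (p ^ (k - t) * T 1%N)%N).
Proof.
case: n A => [|n] A // _ Herg pr op _ HT.
have p1 : (1 < p)%N by apply: prime_gt1.
have HN : forall r, (1 <= r)%N -> forall Q,
    dvdmx (Posz (p ^ r)) (cmx A ^+ Q - 1) <-> (T r %| Q)%N.
  by move=> r r1 Q; rewrite -per_dvdmx; exact: per_minP (HT r r1) Q.
have T1pos : (0 < T 1)%N by case: (HT 1%N (leqnn 1)).
set D := cmx A ^+ T 1%N.
have D1 : dvdmx (Posz (p ^ 1)) (D - 1) by apply/(HN 1%N _ _).2.
have Dn1 : D != 1 := cmx_not_periodic Herg T1pos.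
have : ~~ [forall i, forall j, (D - 1) i j == 0].
  apply: contra Dn1 => /'forall_forallP H; rewrite -subr_eq0; apply/eqP/matrixP.
  by move=> i j; rewrite (eqP (H i j)) mxE.
rewrite negb_forall => /existsP [i]; rewrite negb_forall => /existsP [j] Hij.
pose P := fun r => dvdmx (Posz (p ^ r)) (D - 1).
have Hex : exists r, P r by exists 1%N.
have Hb : forall r, P r -> (r <= `|((D - 1) i j)%R|)%N.
  move=> r /dvdmxP /(_ i j); rewrite dvdzE /= => Hd.
  apply: leq_trans (ltnW (ltn_expl r p1)) _.
  by apply: dvdn_leq Hd; rewrite absz_gt0.
case: (ex_maxnP Hex Hb) => t Pt Hmax.
have t1 : (1 <= t)%N by apply: Hmax.
have [B HB] := dvdmx_scale Pt.
have HD : D = 1 + Posz (p ^ t) *: B by rewrite -HB addrC subrK.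
have nB : ~~ dvdmx (Posz p) B.
  apply/negP => /dvdmxP HpB.
  have : P t.+1.
    apply/dvdmxP => i' j'; rewrite HB mxE expnSr PoszM.
    by apply: dvdz_mul; [apply: dvdzz | apply: HpB].
  by move/Hmax; rewrite ltnn.
have Hit := iter_pow pr op t1 HD.
have nd : forall j, ~~ dvdmx (Posz (p ^ (t + j).+1)) (D ^+ (p ^ j) - 1).
  move=> j'; have [Bj [HBj HdB]] := Hit j'.
  apply/negP; rewrite HBj [1 + _]addrC addrK => /dvdmxP Hd.
  have HpBj : dvdmx (Posz p) Bj.
    apply/dvdmxP => i' j''; have := Hd i' j''.
    rewrite mxE expnS PoszM [Posz p * _]mulrC dvdz_mul2l //.
    by rewrite -natz pnatr_eq0 -lt0n expn_gt0 (prime_gt0 pr).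
  move/negP: nB; apply.
  have -> : B = Bj - (Bj - B) by rewrite opprB addrC subrK.
  exact: dvdmxB.
have T1k : forall k, (1 <= k)%N -> (T 1%N %| T k)%N.
  move=> k k1; apply/(HN 1%N _ _).1 => //.
  apply: (@dvdmx_trans _ _ _ (Posz (p ^ k))).
    by rewrite dvdzE /=; apply: dvdn_exp2l.
  by apply/(HN k k1 _).2.
exists t; split.
  move=> k /andP [k1 kt]; apply/eqP; rewrite eqn_dvd T1k // andbT.
  apply/(HN k k1 _).1; apply: dvdmx_trans Pt.
  by rewrite dvdzE /=; apply: dvdn_exp2l.
move=> k tk.
have k1 : (1 <= k)%N by apply: leq_trans t1 (ltnW tk).
have [j' Ek] : exists j', k = (t + j'.+1)%N by exists (k - t).-1; lia.
have -> : (k - t = j'.+1)%N by lia.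
have Hk : forall e, (T k %| T 1%N * p ^ e)%N <-> (j'.+1 <= e)%N.
  move=> e; split=> [Hd|le].
    rewrite leqNgt; apply/negP => lt.
    have Hd' : (T k %| T 1%N * p ^ j')%N.
      apply: dvdn_trans Hd _; apply: dvdn_mul => //; apply: dvdn_exp2l; lia.
    move/(HN k k1): Hd'; rewrite exprM -/D Ek addnS => Hc.
    by have := nd j'; rewrite Hc.
  rewrite -(HN k k1) exprM -/D.
  have [Bj [HBj _]] := Hit e; rewrite HBj [1 + _]addrC addrK.
  apply: dvdmxZ; rewrite dvdzE /= Ek.
  by apply: dvdn_exp2l; lia.
have [q Eq] := dvdnP (T1k k k1).
have : (q %| p ^ j'.+1)%N.
  by rewrite -(dvdn_pmul2r T1pos) -Eq mulnC; apply/Hk.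
case/(dvdn_pfactor q j'.+1 pr) => a aj Eqa.
have : (j'.+1 <= a)%N by apply/Hk; rewrite Eq Eqa mulnC.
by move=> ja; rewrite Eq Eqa; have -> : a = j'.+1 by lia.
Qed.
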